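(* Let $\xi>0$ be real, let $b\ge0$ and $N\ge2$ be integers, and for integers $0\le d\le N-1$ and $0\le l\le 2d$ put \begin{equation*} f_{d,l} = \exp\left(\frac{(2b+1)(d^2+d)\xi}{2N}\right) \cdot 2\sinh\left(\frac{(2d+1)\xi}{2N}\right) \cdot \prod_{k=1}^{l}4 \sinh\left(\frac{(2d+1+k)\xi}{2N}\right) \sinh\left(\frac{(2d+1-k)\xi}{2N}\right). \end{equation*} Define $S:=(-1)^{N-1}\sum_{d=0}^{N-1}\sum_{l=0}^{2d}(-1)^{d}f_{d,l}$. Then \begin{equation*} S>(1-e^{-\xi/2})\sum_{l=0}^{2N-2}f_{N-1,l}. \end{equation*} *)

(* Defs.v *)
From Stdlib Require Import Reals.
Open Scope R_scope.

Fixpoint rsum (n : nat) (F : nat -> R) : R :=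
  match n with O => 0 | S m => rsum m F + F m end.

Fixpoint rprod1 (l : nat) (F : nat -> R) : R :=
  match l with O => 1 | S m => rprod1 m F * F (S m) end.

Definition f_dl (xi : R) (b N d l : nat) : R :=
  exp ((2 * INR b + 1) * (INR d ^ 2 + INR d) * xi / (2 * INR N)) *
  (2 * sinh ((2 * INR d + 1) * xi / (2 * INR N))) *
  rprod1 l (fun k => 4 * sinh ((2 * INR d + 1 + INR k) * xi / (2 * INR N))
                       * sinh ((2 * INR d + 1 - INR k) * xi / (2 * INR N))).

Definition S_sum (xi : R) (b N : nat) : R :=
  (-1) ^ (N - 1) *
  rsum N (fun d => rsum (2 * d + 1) (fun l => (-1) ^ d * f_dl xi b N d l)).

(* Main.v *)
Require Import Defs.
From Stdlib Require Import Reals Lra Lia.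
Open Scope R_scope.

Lemma exp_le' x y : x <= y -> exp x <= exp y.
Proof. intros [H|H]; [left; apply exp_increasing; auto| subst; lra]. Qed.

Lemma sinh_le' x y : x <= y -> sinh x <= sinh y.
Proof. intros [H|H]; [left; apply sinh_lt; auto| subst; lra]. Qed.

Lemma sinh_pos' x : 0 < x -> 0 < sinh x.
Proof. intros H. rewrite <- sinh_0. apply sinh_lt; auto. Qed.

Lemma rprod1_mono l G H :
  (forall k, (1 <= k <= l)%nat -> 0 <= G k <= H k) ->
  0 <= rprod1 l G <= rprod1 l H.
Proof.
  induction l; simpl; intros Hk. lra.
  assert (A : 0 <= rprod1 l G <= rprod1 l H) by (apply IHl; intros; apply Hk; lia).
  assert (B := Hk (S l) ltac:(lia)).
  split. apply Rmult_le_pos; lra.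
  apply Rmult_le_compat; lra.
Qed.

Lemma rprod1_pos l G :
  (forall k, (1 <= k <= l)%nat -> 0 < G k) -> 0 < rprod1 l G.
Proof.
  induction l; simpl; intros Hk. lra.
  apply Rmult_lt_0_compat; [apply IHl; intros; apply Hk; lia| apply Hk; lia].
Qed.

Lemma rsum_ext n F G : (forall i, (i < n)%nat -> F i = G i) -> rsum n F = rsum n G.
Proof.
  induction n; simpl; intros H; auto.
  rewrite IHn by (intros; apply H; lia). rewrite H by lia. auto.
Qed.

Lemma rsum_le n F G : (forall i, (i < n)%nat -> F i <= G i) -> rsum n F <= rsum n G.
Proof.
  induction n; simpl; intros H. lra.
  assert (rsum n F <= rsum n G) by (apply IHn; intros; apply H; lia).
  assert (F n <= G n) by (apply H; lia). lra.
Qed.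

Lemma rsum_scal n c F : rsum n (fun i => c * F i) = c * rsum n F.
Proof. induction n; simpl; [ring| rewrite IHn; ring]. Qed.

Lemma le2 k d : (k <= 2 * d)%nat -> INR k <= 2 * INR d.
Proof. intros H. apply le_INR in H. rewrite mult_INR in H. simpl in H. lra. Qed.

Lemma rsum_S n F : rsum (S n) F = rsum n F + F n.
Proof. reflexivity. Qed.

Section S.
Variables (xi : R) (b N : nat) (hxi : 0 < xi) (hN : (1 <= N)%nat).

Let x := xi / (2 * INR N).
Lemma x_pos : 0 < x.
Proof.
  unfold x. assert (1 <= INR N) by (replace 1 with (INR 1) by auto; apply le_INR; lia).
  apply Rdiv_lt_0_compat; lra.
Qed.

Lemma fac_pos d k : (k <= 2 * d)%nat ->
  0 < 4 * sinh ((2 * INR d + 1 + INR k) * xi / (2 * INR N))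
                       * sinh ((2 * INR d + 1 - INR k) * xi / (2 * INR N)).
Proof.
  intros Hk. assert (Hx := x_pos). unfold x in Hx.
  assert (INR k <= 2 * INR d) by (apply le2; auto).
  assert (0 <= INR k) by apply pos_INR.
  assert (0 < sinh ((2 * INR d + 1 + INR k) * xi / (2 * INR N))).
  { apply sinh_pos'. unfold Rdiv. rewrite Rmult_assoc. apply Rmult_lt_0_compat; lra. }
  assert (0 < sinh ((2 * INR d + 1 - INR k) * xi / (2 * INR N))).
  { apply sinh_pos'. unfold Rdiv. rewrite Rmult_assoc. apply Rmult_lt_0_compat; lra. }
  apply Rmult_lt_0_compat; lra.
Qed.

Lemma f_pos d l : (l <= 2 * d)%nat -> 0 < f_dl xi b N d l.
Proof.
  intros Hl. unfold f_dl. assert (Hx := x_pos). unfold x in Hx.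
  assert (0 <= INR d) by apply pos_INR.
  apply Rmult_lt_0_compat; [apply Rmult_lt_0_compat|].
  - apply exp_pos.
  - assert (0 < sinh ((2 * INR d + 1) * xi / (2 * INR N))); [|lra].
    apply sinh_pos'. unfold Rdiv. rewrite Rmult_assoc. apply Rmult_lt_0_compat; lra.
  - apply rprod1_pos. intros; apply fac_pos; lia.
Qed.

Lemma f_core d l y : (l <= 2 * d)%nat ->
  y <= (2 * INR b + 1) * (2 * INR d + 2) * x ->
  f_dl xi b N d l <= exp (- y) * f_dl xi b N (S d) l.
Proof.
  intros Hl Hy. assert (Hx := x_pos). unfold x in Hx, Hy.
  assert (0 <= INR d) by apply pos_INR.
  unfold f_dl. rewrite S_INR.
  rewrite <- !Rmult_assoc.
  apply Rmult_le_compat.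
  - apply Rmult_le_pos; [apply Rmult_le_pos; [left; apply exp_pos|lra]|].
    left; apply sinh_pos'. unfold Rdiv. rewrite Rmult_assoc. apply Rmult_lt_0_compat; lra.
  - left; apply rprod1_pos. intros; apply fac_pos; lia.
  - apply Rmult_le_compat.
    + apply Rmult_le_pos; [left; apply exp_pos|lra].
    + left; apply sinh_pos'. unfold Rdiv. rewrite Rmult_assoc. apply Rmult_lt_0_compat; lra.
    + rewrite <- exp_plus. apply Rmult_le_compat_r; [lra|]. apply exp_le'.
      assert (E : - y + (2 * INR b + 1) * ((INR d + 1) ^ 2 + (INR d + 1)) * xi / (2 * INR N)
                 - (2 * INR b + 1) * (INR d ^ 2 + INR d) * xi / (2 * INR N)
                 = (2 * INR b + 1) * (2 * INR d + 2) * (xi / (2 * INR N)) - y) by (unfold Rdiv; ring).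
      lra.
    + apply sinh_le'. unfold Rdiv. rewrite !(Rmult_assoc _ xi). apply Rmult_le_compat_r; lra.
  - apply rprod1_mono. intros k Hk. split; [left; apply fac_pos; lia|].
    assert (INR k <= 2 * INR d) by (apply le2; lia).
    assert (0 <= INR k) by apply pos_INR.
    unfold Rdiv. rewrite !(Rmult_assoc _ xi).
    set (z := xi * / (2 * INR N)).
    assert (0 < z) by (unfold z; exact Hx).
    assert (0 < sinh ((2 * INR d + 1 + INR k) * z)) by (apply sinh_pos'; apply Rmult_lt_0_compat; lra).
    assert (0 < sinh ((2 * INR d + 1 - INR k) * z)) by (apply sinh_pos'; apply Rmult_lt_0_compat; lra).
    assert (sinh ((2 * INR d + 1 + INR k) * z) <= sinh ((2 * (INR d + 1) + 1 + INR k) * z))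
      by (apply sinh_le'; apply Rmult_le_compat_r; lra).
    assert (sinh ((2 * INR d + 1 - INR k) * z) <= sinh ((2 * (INR d + 1) + 1 - INR k) * z))
      by (apply sinh_le'; apply Rmult_le_compat_r; lra).
    apply Rmult_le_compat; try lra.
Qed.

Definition F d := rsum (2 * d + 1) (fun l => f_dl xi b N d l).

Lemma F_pos d : 0 < F d.
Proof.
  unfold F. replace (2 * d + 1)%nat with (S (2 * d)) by lia. simpl.
  assert (0 <= rsum (d + (d + 0)) (fun l => f_dl xi b N d l)).
  { replace 0 with (rsum (d + (d + 0)) (fun _ => 0)).
    apply rsum_le. intros; left; apply f_pos; lia.
    clear. induction (d + (d+0))%nat; simpl; [auto| rewrite IHn; ring]. }
  assert (0 < f_dl xi b N d (d + (d + 0))) by (apply f_pos; lia). lra.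
Qed.

Lemma F_step d y : y <= (2 * INR b + 1) * (2 * INR d + 2) * x ->
  F d < exp (- y) * F (S d).
Proof.
  intros Hy. unfold F.
  replace (2 * S d + 1)%nat with (S (S (2 * d + 1))) by lia. rewrite !rsum_S.
  assert (rsum (2 * d + 1) (fun l => f_dl xi b N d l) <=
          rsum (2 * d + 1) (fun l => exp (-y) * f_dl xi b N (S d) l)).
  { apply rsum_le. intros. apply f_core; auto; lia. }
  rewrite rsum_scal in H.
  assert (0 < f_dl xi b N (S d) (2 * d + 1)) by (apply f_pos; lia).
  assert (0 < f_dl xi b N (S d) (S (2 * d + 1))) by (apply f_pos; lia).
  assert (0 < exp (- y)) by apply exp_pos.
  assert (0 < exp (-y) * f_dl xi b N (S d) (2 * d + 1)) by (apply Rmult_lt_0_compat; lra).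
  assert (0 < exp (-y) * f_dl xi b N (S d) (S (2 * d + 1))) by (apply Rmult_lt_0_compat; lra).
  rewrite Rmult_plus_distr_l, Rmult_plus_distr_l. change (fun l : nat => f_dl xi b N (S d) l) with (f_dl xi b N (S d)). lra.
Qed.

Lemma F_mono d : F d <= F (S d).
Proof.
  assert (H := F_step d 0). rewrite Ropp_0, exp_0, Rmult_1_l in H. left; apply H.
  assert (Hx := x_pos). assert (0 <= INR b) by apply pos_INR. assert (0 <= INR d) by apply pos_INR.
  apply Rmult_le_pos; [|lra]. apply Rmult_le_pos; lra.
Qed.

Definition G m := (-1) ^ m * rsum (S m) (fun d => (-1) ^ d * F d).

Lemma m1sq n : (-1) ^ n * (-1) ^ n = 1.
Proof. induction n; simpl; [ring|]. replace (-1 * (-1) ^ n * (-1 * (-1) ^ n)) with ((-1) ^ n * (-1) ^ n) by ring. auto. Qed.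

Lemma G_S m : G (S m) = F (S m) - G m.
Proof.
  unfold G. change (rsum (S (S m)) (fun d => (-1) ^ d * F d)) with
    (rsum (S m) (fun d => (-1) ^ d * F d) + (-1) ^ (S m) * F (S m)).
  rewrite Rmult_plus_distr_l, <- Rmult_assoc, m1sq. simpl. ring.
Qed.

Lemma G_bounds m : 0 <= G m <= F m.
Proof.
  induction m.
  - unfold G. simpl. assert (H := F_pos 0). lra.
  - rewrite G_S. assert (H := F_mono m). lra.
Qed.
End S.

Theorem lemma3p3 (xi : R) (b N : nat) (hxi : 0 < xi) (hN : (2 <= N)%nat) :
  S_sum xi b N >
  (1 - exp (- xi / 2)) * rsum (2 * N - 1) (fun l => f_dl xi b N (N - 1) l).
Proof.
  destruct N as [|[|M]]; try lia.
  replace (S (S M) - 1)%nat with (S M) by lia.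
  replace (2 * S (S M) - 1)%nat with (2 * S M + 1)%nat by lia.
  assert (HS : S_sum xi b (S (S M)) = G xi b (S (S M)) (S M)).
  { unfold S_sum, G. replace (S (S M) - 1)%nat with (S M) by lia. f_equal.
    apply rsum_ext. intros d _. apply rsum_scal. }
  rewrite HS, G_S by lia.
  fold (F xi b (S (S M)) (S M)).
  assert (Hb := G_bounds xi b (S (S M)) hxi ltac:(lia) M).
  assert (Hst := F_step xi b (S (S M)) hxi ltac:(lia) M (xi / 2)).
  assert (0 <= INR b) by apply pos_INR. assert (0 <= INR M) by apply pos_INR.
  rewrite S_INR, S_INR in Hst.
  replace (- xi / 2) with (- (xi / 2)) by (unfold Rdiv; ring).
  assert (xi / 2 <= (2 * INR b + 1) * (2 * INR M + 2) * (xi / (2 * (INR M + 1 + 1)))).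
  { replace (xi / 2) with ((INR M + 1 + 1) * (xi / (2 * (INR M + 1 + 1)))) by (field; lra).
    apply Rmult_le_compat_r. left; apply Rdiv_lt_0_compat; lra. nra. }
  specialize (Hst H1). unfold Rgt. lra.
Qed.
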